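(* Let $(X,\varphi)$ be an irreducible Smale space, $\mathcal R_1$ a Markov partition with $\max_{R\in\mathcal R_1}\operatorname{diam}R\le\varepsilon_X''/2$, and $\mathcal R_n=\{R\in\bigvee_{i=1-n}^{n-1}\varphi^{-i}(\mathcal R_1):\operatorname{int}R\ne\varnothing\}$ for $n\in\mathbb N$. If $\varphi^{-1}$ is Lipschitz then for every $n\in\mathbb N$ $$\min_{R\in\mathcal R_n}\operatorname{diam}(R)\ge\operatorname{Lip}(\varphi^{-1})^{-n+1}\,\underline{\operatorname{diam}}_s\mathcal R_1,$$ and if $\varphi$ is Lipschitz then for every $n\in\mathbb N$ $$\min_{R\in\mathcal R_n}\operatorname{diam}(R)\ge\operatorname{Lip}(\varphi)^{-n+1}\,\underline{\operatorname{diam}}_u\mathcal R_1.$$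
   Context: Here $\underline{\operatorname{diam}}_s\mathcal R_1=\min_{R\in\mathcal R_1}\inf_{x\in R}\operatorname{diam}(X^s(x,R))$ and $\underline{\operatorname{diam}}_u\mathcal R_1=\min_{R\in\mathcal R_1}\inf_{x\in R}\operatorname{diam}(X^u(x,R))$. A Smale space $(X,\varphi)$: compact metric space $(X,d)$ (assumed infinite), homeomorphism $\varphi$, constants $\varepsilon_X>0,\lambda_X>1$ and a continuous bracket $[\cdot,\cdot]$ on $\{(x,y):d(x,y)\le\varepsilon_X\}$ with $[x,x]=x$, $[x,[y,z]]=[x,z]$, $[[x,y],z]=[x,z]$, $\varphi([x,y])=[\varphi(x),\varphi(y)]$ (whenever defined), such that $\varphi$ contracts distances by $\lambda_X^{-1}$ on local stable sets $X^s(x,\varepsilon)=\{y:d(x,y)<\varepsilon,[x,y]=y\}$ and $\varphi^{-1}$ contracts by $\lambda_X^{-1}$ on local unstable sets $X^u(x,\varepsilon)=\{y:d(x,y)<\varepsilon,[y,x]=y\}$. Irreducible: for nonempty open $U,V$ some $n\in\mathbb N$ has $\varphi^n(U)\cap V\ne\varnothing$. Fix $\varepsilon_X'\in(0,\varepsilon_X/2]$ with $d(x,y)\le\varepsilon_X'\Rightarrow d(x,[x,y]),d(y,[x,y])<\varepsilon_X/2$, and $\varepsilon_X''\in(0,\varepsilon_X'/12)$ with $d(x,y)\le\varepsilon_X''\Rightarrow d(\varphi^i x,\varphi^i y)\le\varepsilon_X'/2$ ($|i|\le2$) and $d([x,y],x),d([x,y],y)\le\varepsilon_X'/4$. Rectangle: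 nonempty $R$, $\operatorname{diam}R\le\varepsilon_X'$, $[x,y]\in R$ for $x,y\in R$; $X^{s}(x,R)=X^{s}(x,2\varepsilon_X')\cap R$, $X^{u}(x,R)=X^{u}(x,2\varepsilon_X')\cap R$; proper: closed with $R=\operatorname{cl}\operatorname{int}R$. Markov partition: finite cover by nonempty proper rectangles with pairwise disjoint interiors such that $\varphi(X^u(x,R_i))\supset X^u(\varphi x,R_j)$ and $\varphi(X^s(x,R_i))\subset X^s(\varphi x,R_j)$ whenever $x\in\operatorname{int}R_i\cap\varphi^{-1}(\operatorname{int}R_j)$. $\mathcal U\vee\mathcal W=\{U\cap W\}$. *)

(* Defs.v *)
From Stdlib Require Import Reals List ZArith.
From Coquelicot Require Import Rbar Lub.
Open Scope R_scope.

Section SmaleDefs.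
Variable X : Type.
Variable d : X -> X -> R.

Definition is_metric : Prop :=
  (forall x y, 0 <= d x y) /\ (forall x y, d x y = 0 <-> x = y) /\
  (forall x y, d x y = d y x) /\ (forall x y z, d x z <= d x y + d y z).

Definition sm_open (U : X -> Prop) : Prop :=
  forall x, U x -> exists r, 0 < r /\ forall y, d x y < r -> U y.
Definition sm_interior (A : X -> Prop) : X -> Prop :=
  fun x => exists r, 0 < r /\ forall y, d x y < r -> A y.
Definition sm_closure (A : X -> Prop) : X -> Prop :=
  fun x => forall r, 0 < r -> exists y, A y /\ d x y < r.
Definition sm_closed (A : X -> Prop) : Prop := forall x, sm_closure A x -> A x.

Definition sm_compact : Prop :=
  forall (I : Type) (U : I -> X -> Prop),
    (forall i, sm_open (U i)) -> (forall x, exists i, U i x) ->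
    exists l : list I, forall x, exists i, In i l /\ U i x.

Definition sm_infinite : Prop := ~ exists l : list X, forall x, In x l.

Definition sm_continuous (f : X -> X) : Prop :=
  forall x e, 0 < e -> exists del, 0 < del /\ forall y, d x y < del -> d (f x) (f y) < e.

(* diameter: sup of distances (0 for the empty set) *)
Definition diam (A : X -> Prop) : R :=
  real (Lub_Rbar (fun r => exists x y, A x /\ A y /\ r = d x y)).

Definition zpow (phi phiinv : X -> X) (i : Z) (x : X) : X :=
  match i with
  | Z0 => x
  | Zpos p => Nat.iter (Pos.to_nat p) phi x
  | Zneg p => Nat.iter (Pos.to_nat p) phiinv x
  end.

(* Smale space (bracket given as a total function, only used where defined) *)
Definition is_smale_space (phi phiinv : X -> X) (br : X -> X -> X) (epsX lamX : R) : Prop :=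
  is_metric /\ sm_compact /\ sm_infinite /\
  (forall x, phi (phiinv x) = x) /\ (forall x, phiinv (phi x) = x) /\
  sm_continuous phi /\ sm_continuous phiinv /\
  0 < epsX /\ 1 < lamX /\
  (forall x y e, d x y <= epsX -> 0 < e -> exists del, 0 < del /\
     forall x' y', d x' y' <= epsX -> d x x' < del -> d y y' < del ->
       d (br x y) (br x' y') < e) /\
  (forall x, br x x = x) /\
  (forall x y z, d y z <= epsX -> d x (br y z) <= epsX -> d x z <= epsX ->
     br x (br y z) = br x z) /\
  (forall x y z, d x y <= epsX -> d (br x y) z <= epsX -> d x z <= epsX ->
     br (br x y) z = br x z) /\
  (forall x y, d x y <= epsX -> d (phi x) (phi y) <= epsX ->
     phi (br x y) = br (phi x) (phi y)) /\
  (* contraction on local stable / unstable sets *)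
  (forall x y z, d x y < epsX -> br x y = y -> d x z < epsX -> br x z = z ->
     d (phi y) (phi z) <= / lamX * d y z) /\
  (forall x y z, d y x < epsX -> br y x = y -> d z x < epsX -> br z x = z ->
     d (phiinv y) (phiinv z) <= / lamX * d y z).

Definition irreducible (phi phiinv : X -> X) : Prop :=
  forall U V : X -> Prop, sm_open U -> sm_open V ->
    (exists x, U x) -> (exists x, V x) ->
    exists n : nat, (1 <= n)%nat /\ exists x, U x /\ V (Nat.iter n phi x).

Definition Xs (br : X -> X -> X) (x : X) (e : R) : X -> Prop :=
  fun y => d x y < e /\ br x y = y.
Definition Xu (br : X -> X -> X) (x : X) (e : R) : X -> Prop :=
  fun y => d x y < e /\ br y x = y.

Definition eps1_ok (br : X -> X -> X) (epsX eps1 : R) : Prop :=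
  0 < eps1 /\ eps1 <= epsX / 2 /\
  forall x y, d x y <= eps1 -> d x (br x y) < epsX / 2 /\ d y (br x y) < epsX / 2.

Definition eps2_ok (phi phiinv : X -> X) (br : X -> X -> X) (eps1 eps2 : R) : Prop :=
  0 < eps2 /\ eps2 < eps1 / 12 /\
  forall x y, d x y <= eps2 ->
    (forall i : Z, (-2 <= i <= 2)%Z ->
       d (zpow phi phiinv i x) (zpow phi phiinv i y) <= eps1 / 2) /\
    d (br x y) x <= eps1 / 4 /\ d (br x y) y <= eps1 / 4.

Definition rectangle (br : X -> X -> X) (eps1 : R) (A : X -> Prop) : Prop :=
  (exists x, A x) /\ diam A <= eps1 /\ forall x y, A x -> A y -> A (br x y).

Definition XsR (br : X -> X -> X) (eps1 : R) (x : X) (A : X -> Prop) : X -> Prop :=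
  fun y => Xs br x (2 * eps1) y /\ A y.
Definition XuR (br : X -> X -> X) (eps1 : R) (x : X) (A : X -> Prop) : X -> Prop :=
  fun y => Xu br x (2 * eps1) y /\ A y.

Definition proper (A : X -> Prop) : Prop :=
  sm_closed A /\ forall x, A x <-> sm_closure (sm_interior A) x.

Definition markov_partition (phi phiinv : X -> X) (br : X -> X -> X) (eps1 : R)
    (P : list (X -> Prop)) : Prop :=
  (forall A, In A P -> rectangle br eps1 A /\ proper A) /\
  (forall x, exists A, In A P /\ A x) /\
  (forall i j, (i < length P)%nat -> (j < length P)%nat -> i <> j ->
     forall x, ~ (sm_interior (nth i P (fun _ => False)) x /\
                  sm_interior (nth j P (fun _ => False)) x)) /\
  (forall i j x, (i < length P)%nat -> (j < length P)%nat ->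
     let Ri := nth i P (fun _ => False) in
     let Rj := nth j P (fun _ => False) in
     sm_interior Ri x -> sm_interior Rj (phi x) ->
     (forall z, XuR br eps1 (phi x) Rj z -> exists y, XuR br eps1 x Ri y /\ phi y = z) /\
     (forall y, XsR br eps1 x Ri y -> XsR br eps1 (phi x) Rj (phi y))).

Definition cell (phi phiinv : X -> X) (P : list (X -> Prop)) (n : nat) (k : Z -> nat)
  : X -> Prop :=
  fun x => forall i : Z, (1 - Z.of_nat n <= i <= Z.of_nat n - 1)%Z ->
    nth (k i) P (fun _ => False) (zpow phi phiinv i x).

Definition valid_index (P : list (X -> Prop)) (n : nat) (k : Z -> nat) : Prop :=
  forall i : Z, (1 - Z.of_nat n <= i <= Z.of_nat n - 1)%Z -> (k i < length P)%nat.

(* min_{R in R_n} diam R  (R_n = cells with nonempty interior; finite family) *)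
Definition min_diam_Rn (phi phiinv : X -> X) (P : list (X -> Prop)) (n : nat) : R :=
  real (Glb_Rbar (fun r => exists k, valid_index P n k /\
     (exists x, sm_interior (cell phi phiinv P n k) x) /\
     r = diam (cell phi phiinv P n k))).

Definition inf_diam_s (br : X -> X -> X) (eps1 : R) (A : X -> Prop) : R :=
  real (Glb_Rbar (fun r => exists x, A x /\ r = diam (XsR br eps1 x A))).
Definition inf_diam_u (br : X -> X -> X) (eps1 : R) (A : X -> Prop) : R :=
  real (Glb_Rbar (fun r => exists x, A x /\ r = diam (XuR br eps1 x A))).
Definition low_diam_s (br : X -> X -> X) (eps1 : R) (P : list (X -> Prop)) : R :=
  real (Glb_Rbar (fun r => exists A, In A P /\ r = inf_diam_s br eps1 A)).
Definition low_diam_u (br : X -> X -> X) (eps1 : R) (P : list (X -> Prop)) : R :=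
  real (Glb_Rbar (fun r => exists A, In A P /\ r = inf_diam_u br eps1 A)).

Definition lipschitz (f : X -> X) : Prop :=
  exists L, 0 <= L /\ forall x y, d (f x) (f y) <= L * d x y.
Definition Lip (f : X -> X) : R :=
  real (Glb_Rbar (fun L => 0 <= L /\ forall x y, d (f x) (f y) <= L * d x y)).

End SmaleDefs.

(* Main.v *)
Require Import Defs.
From Stdlib Require Import Reals List ZArith Lra Lia Classical ClassicalEpsilon.
From Coquelicot Require Import Rbar Lub.
Open Scope R_scope.

Lemma real_lub_le (E : R -> Prop) B : 0 <= B -> (forall r, E r -> r <= B) ->
  real (Lub_Rbar E) <= B.
Proof.
  intros HB H. destruct (Lub_Rbar_correct E) as [_ H2].
  assert (Hl : Rbar_le (Lub_Rbar E) B) by (apply H2; intros r Hr; apply H; auto).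
  destruct (Lub_Rbar E); simpl in *; lra.
Qed.

Lemma real_lub_ge (E : R -> Prop) M r0 : (forall r, E r -> r <= M) -> E r0 ->
  r0 <= real (Lub_Rbar E).
Proof.
  intros H H0. destruct (Lub_Rbar_correct E) as [H1 H2].
  assert (Hl : Rbar_le (Lub_Rbar E) M) by (apply H2; intros r Hr; apply H; auto).
  specialize (H1 r0 H0).
  destruct (Lub_Rbar E); simpl in *; lra.
Qed.

Lemma real_lub_ge0 (E : R -> Prop) : (forall r, E r -> 0 <= r) ->
  0 <= real (Lub_Rbar E).
Proof.
  intros H. destruct (Lub_Rbar_correct E) as [H1 H2].
  destruct (Lub_Rbar E) eqn:Hq; simpl; try lra.
  destruct (classic (exists e, E e)) as [[e He]|Hn].
  - specialize (H1 e He). simpl in H1. specialize (H e He). lra.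
  - assert (Hb : Rbar_le (Finite r) m_infty).
    { apply H2. intros x Hx. exfalso. apply Hn. eauto. }
    simpl in Hb. contradiction.
Qed.

Lemma real_glb_le (E : R -> Prop) e : (forall r, E r -> 0 <= r) -> E e ->
  real (Glb_Rbar E) <= e.
Proof.
  intros H He. destruct (Glb_Rbar_correct E) as [H1 H2].
  assert (Hl : Rbar_le 0 (Glb_Rbar E)) by (apply H2; intros r Hr; apply H; auto).
  specialize (H1 e He).
  destruct (Glb_Rbar E); simpl in *; lra.
Qed.

Lemma real_glb_ge0 (E : R -> Prop) : (forall r, E r -> 0 <= r) ->
  0 <= real (Glb_Rbar E).
Proof.
  intros H. destruct (Glb_Rbar_correct E) as [H1 H2].
  assert (Hl : Rbar_le 0 (Glb_Rbar E)) by (apply H2; intros r Hr; apply H; auto).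
  destruct (Glb_Rbar E); simpl in *; lra.
Qed.

Lemma real_glb_ge (E : R -> Prop) m e : E e -> (forall r, E r -> m <= r) ->
  m <= real (Glb_Rbar E).
Proof.
  intros He H. destruct (Glb_Rbar_correct E) as [H1 H2].
  assert (Hl : Rbar_le m (Glb_Rbar E)) by (apply H2; intros r Hr; apply H; auto).
  specialize (H1 e He).
  destruct (Glb_Rbar E); simpl in *; lra.
Qed.
Section S.
Variable X : Type.
Variable d : X -> X -> R.
Variables phi phiinv : X -> X.
Hypothesis Hm : is_metric X d.
Hypothesis Hpi : forall x, phi (phiinv x) = x.
Hypothesis Hip : forall x, phiinv (phi x) = x.

Notation zp := (zpow X phi phiinv).

Lemma d_ge0 x y : 0 <= d x y. Proof. apply Hm. Qed.
Lemma d_refl x : d x x = 0. Proof. apply Hm; auto. Qed.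
Lemma d_sym x y : d x y = d y x. Proof. apply Hm. Qed.
Lemma d_tri x y z : d x z <= d x y + d y z. Proof. apply Hm. Qed.

Lemma zpow_succ i x : zp (Z.succ i) x = phi (zp i x).
Proof.
  destruct i as [|p|p].
  - reflexivity.
  - replace (Z.succ (Z.pos p)) with (Z.pos (Pos.succ p)) by lia.
    simpl. rewrite Pos2Nat.inj_succ. reflexivity.
  - destruct (Pos.succ_pred_or p) as [->|Hp].
    + simpl. rewrite Hpi. reflexivity.
    + rewrite <- Hp. replace (Z.succ (Z.neg (Pos.succ (Pos.pred p)))) with (Z.neg (Pos.pred p)) by lia.
      simpl. rewrite Pos2Nat.inj_succ. simpl. rewrite Hpi. reflexivity.
Qed.

Lemma zpow_pred i x : zp (Z.pred i) x = phiinv (zp i x).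
Proof.
  rewrite <- (Z.succ_pred i) at 2. rewrite zpow_succ, Hip. reflexivity.
Qed.

Lemma zpow_add i j y : zp i (zp j y) = zp (i + j) y.
Proof.
  induction i using Z.peano_ind.
  - reflexivity.
  - rewrite zpow_succ, IHi, Z.add_succ_l, zpow_succ. reflexivity.
  - rewrite zpow_pred, IHi, Z.add_pred_l, zpow_pred. reflexivity.
Qed.

Lemma zpow_inv i y : zp i (zp (- i) y) = y.
Proof. rewrite zpow_add. replace (i + - i)%Z with 0%Z by lia. reflexivity. Qed.

Lemma zpow_nat m x : zp (Z.of_nat m) x = Nat.iter m phi x.
Proof. destruct m; simpl; [reflexivity|]. rewrite SuccNat2Pos.id_succ. reflexivity. Qed.

Lemma zpow_negnat m x : zp (- Z.of_nat m) x = Nat.iter m phiinv x.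
Proof. destruct m; simpl; [reflexivity|]. rewrite SuccNat2Pos.id_succ. reflexivity. Qed.

Lemma cont_comp f g : sm_continuous X d f -> sm_continuous X d g ->
  sm_continuous X d (fun x => f (g x)).
Proof.
  intros Hf Hg x e He.
  destruct (Hf (g x) e He) as [d1 [Hd1 H1]].
  destruct (Hg x d1 Hd1) as [d2 [Hd2 H2]].
  exists d2. split; auto.
Qed.

Lemma zpow_cont i : sm_continuous X d phi -> sm_continuous X d phiinv ->
  sm_continuous X d (zp i).
Proof.
  intros Hc1 Hc2.
  induction i using Z.peano_ind.
  - intros x e He. exists e. split; auto.
  - intros x e He. destruct (cont_comp _ _ Hc1 IHi x e He) as [del [H1 H2]].
    exists del. split; auto. intros y Hy. rewrite !zpow_succ. auto.
  - intros x e He. destruct (cont_comp _ _ Hc2 IHi x e He) as [del [H1 H2]].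
    exists del. split; auto. intros y Hy. rewrite !zpow_pred. auto.
Qed.

Lemma list_bound (f : X -> R) (l : list X) : exists B, forall c, In c l -> f c <= B.
Proof.
  induction l as [|a l [B HB]].
  - exists 0. intros c [].
  - exists (Rmax (f a) B). intros c [<-|Hc].
    + apply Rmax_l.
    + eapply Rle_trans; [apply HB; auto| apply Rmax_r].
Qed.

Lemma bounded : sm_compact X d -> exists M, forall a b, d a b <= M.
Proof.
  intros Hc.
  destruct (classic (exists x0 : X, True)) as [[x0 _]|Hn].
  2:{ exists 0. intros a. exfalso. apply Hn. eauto. }
  destruct (Hc X (fun c y => d c y < 1)) as [l Hl].
  - intros c y Hy. exists (1 - d c y). split; [lra|].
    intros z Hz. pose proof (d_tri c y z). lra.
  - intros x. exists x. rewrite d_refl. lra.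
  - destruct (list_bound (d x0) l) as [B HB].
    exists (2 * (B + 1)). intros a b.
    destruct (Hl a) as [ca [Ha1 Ha2]]. destruct (Hl b) as [cb [Hb1 Hb2]].
    pose proof (HB _ Ha1). pose proof (HB _ Hb1).
    pose proof (d_tri a x0 b). pose proof (d_tri x0 ca a). pose proof (d_tri x0 cb b).
    rewrite (d_sym a x0) in *. lra.
Qed.

Lemma diam_ge0 A : 0 <= diam X d A.
Proof. apply real_lub_ge0. intros r (x & y & _ & _ & ->). apply d_ge0. Qed.

Lemma diam_le A B : 0 <= B -> (forall a b, A a -> A b -> d a b <= B) -> diam X d A <= B.
Proof. intros HB H. apply real_lub_le; auto. intros r (x & y & Hx & Hy & ->). auto. Qed.

Lemma diam_ge M A a b : (forall a b, d a b <= M) -> A a -> A b -> d a b <= diam X d A.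
Proof.
  intros HM Ha Hb. apply (real_lub_ge _ M).
  - intros r (x & y & _ & _ & ->). auto.
  - exists a, b. auto.
Qed.

Lemma lip_att f : lipschitz X d f ->
  0 <= Lip X d f /\ forall x y, d (f x) (f y) <= Lip X d f * d x y.
Proof.
  intros [L0 [HL0 HL]]. unfold Lip.
  set (E := fun L => 0 <= L /\ forall x y, d (f x) (f y) <= L * d x y).
  destruct (Glb_Rbar_correct E) as [H1 H2].
  assert (Hl : Rbar_le 0 (Glb_Rbar E)) by (apply H2; intros r [Hr _]; exact Hr).
  assert (Hu : Rbar_le (Glb_Rbar E) L0) by (apply H1; split; auto).
  destruct (Glb_Rbar E) as [g| |] eqn:Hg; simpl in Hl, Hu; try contradiction.
  simpl. split; auto. intros x y.
  destruct (Req_dec (d x y) 0) as [H0|H0].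
  - apply Hm in H0. subst. rewrite !d_refl. lra.
  - pose proof (d_ge0 x y).
    destruct (Rle_or_lt (d (f x) (f y)) (g * d x y)) as [Hle|Hlt]; auto.
    exfalso.
    assert (Hb : Rbar_le (d (f x) (f y) / d x y) g).
    { apply H2. intros L [_ HL']. simpl.
      specialize (HL' x y). apply Rmult_le_reg_r with (d x y); [lra|].
      field_simplify; lra. }
    simpl in Hb.
    assert (d (f x) (f y) <= g * d x y); [|lra].
    apply Rmult_le_compat_r with (r := d x y) in Hb; [|lra].
    field_simplify in Hb; lra.
Qed.

Lemma iter_lip f L m a b : 0 <= L -> (forall x y, d (f x) (f y) <= L * d x y) ->
  d (Nat.iter m f a) (Nat.iter m f b) <= L ^ m * d a b.
Proof.
  intros HL H. induction m; simpl.
  - lra.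
  - eapply Rle_trans; [apply H|]. rewrite Rmult_assoc. apply Rmult_le_compat_l; auto.
Qed.

End S.
Section T.
Variable X : Type.
Variable d : X -> X -> R.
Variables phi phiinv : X -> X.
Hypothesis Hm : is_metric X d.
Hypothesis Hpi : forall x, phi (phiinv x) = x.
Hypothesis Hip : forall x, phiinv (phi x) = x.
Hypothesis Hc1 : sm_continuous X d phi.
Hypothesis Hc2 : sm_continuous X d phiinv.

Notation zp := (zpow X phi phiinv).
Definition dense (O : X -> Prop) := forall x r, 0 < r -> exists y, d x y < r /\ O y.

Lemma inter_od (O : nat -> X -> Prop) m : (forall j, sm_open X d (O j)) -> (forall j, dense (O j)) ->
  sm_open X d (fun y => forall j, (j < m)%nat -> O j y) /\ dense (fun y => forall j, (j < m)%nat -> O j y).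
Proof.
  intros Ho Hd. induction m as [|m [IHo IHd]].
  - split.
    + intros x _. exists 1. split; [lra|]. intros; lia.
    + intros x r Hr. exists x. rewrite (d_refl X d Hm). split; [lra|]. intros; lia.
  - split.
    + intros x Hx.
      destruct (IHo x (fun j Hj => Hx j ltac:(lia))) as [r1 [Hr1 H1]].
      destruct (Ho m x (Hx m ltac:(lia))) as [r2 [Hr2 H2]].
      exists (Rmin r1 r2). split; [apply Rmin_pos; auto|].
      intros y Hy j Hj. pose proof (Rmin_l r1 r2). pose proof (Rmin_r r1 r2).
      destruct (Nat.eq_dec j m) as [->|Hne]. apply H2; lra. apply H1; [lra|lia].
    + intros x r Hr.
      destruct (IHd x (r/2) ltac:(lra)) as [x1 [Hx1 Hw]].
      destruct (IHo x1 Hw) as [s [Hs Hs']].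
      destruct (Hd m x1 (Rmin (r/2) s) ltac:(apply Rmin_pos; lra)) as [y [Hy Hoy]].
      pose proof (Rmin_l (r/2) s). pose proof (Rmin_r (r/2) s).
      exists y. split.
      * pose proof (d_tri X d Hm x x1 y). lra.
      * intros j Hj. destruct (Nat.eq_dec j m) as [->|Hne]; auto. apply Hs'; [lra|lia].
Qed.

Lemma preim_od (U : X -> Prop) i : sm_open X d U -> dense U ->
  sm_open X d (fun y => U (zp i y)) /\ dense (fun y => U (zp i y)).
Proof.
  intros Ho Hd. split.
  - intros x Hx. destruct (Ho _ Hx) as [r [Hr H]].
    destruct (zpow_cont X d phi phiinv Hpi Hip i Hc1 Hc2 x r Hr) as [del [Hdel H']].
    exists del. split; auto.
  - intros x r Hr.
    destruct (zpow_cont X d phi phiinv Hpi Hip (- i) Hc1 Hc2 (zp i x) r Hr) as [del [Hdel H']].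
    destruct (Hd (zp i x) del Hdel) as [z [Hz Uz]].
    exists (zp (- i) z). split.
    + specialize (H' z Hz). rewrite zpow_add in H' by auto.
      replace (- i + i)%Z with 0%Z in H' by lia. exact H'.
    + rewrite zpow_inv by auto. exact Uz.
Qed.

Lemma finite_inter (Q : nat -> X -> Prop) x m :
  (forall j, (j < m)%nat -> exists s, 0 < s /\ forall y, d x y < s -> Q j y) ->
  exists s, 0 < s /\ forall y, d x y < s -> forall j, (j < m)%nat -> Q j y.
Proof.
  induction m as [|m IH]; intros H.
  - exists 1. split; [lra|]. intros; lia.
  - destruct IH as [s1 [Hs1 H1]]. { intros j Hj. apply H. lia. }
    destruct (H m ltac:(lia)) as [s2 [Hs2 H2]].
    exists (Rmin s1 s2). split; [apply Rmin_pos; auto|].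
    intros y Hy j Hj. pose proof (Rmin_l s1 s2). pose proof (Rmin_r s1 s2).
    destruct (Nat.eq_dec j m) as [->|Hne]. apply H2; lra. apply H1; [lra|lia].
Qed.

Definition Fl : X -> Prop := fun _ => False.

Lemma interior_iter P n k x : sm_interior X d (cell X phi phiinv P n k) x ->
  forall i, (1 - Z.of_nat n <= i <= Z.of_nat n - 1)%Z ->
  sm_interior X d (nth (k i) P Fl) (zp i x).
Proof.
  intros [r [Hr H]] i Hi.
  destruct (zpow_cont X d phi phiinv Hpi Hip (- i) Hc1 Hc2 (zp i x) r Hr) as [del [Hdel H']].
  exists del. split; auto. intros y Hy.
  specialize (H' y Hy). rewrite zpow_add in H' by auto.
  replace (- i + i)%Z with 0%Z in H' by lia. simpl in H'.
  specialize (H _ H' i Hi). rewrite zpow_inv in H by auto. exact H.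
Qed.

Lemma exists_cell P n : sm_infinite X ->
  (forall A, In A P -> proper X d A) -> (forall x, exists A, In A P /\ A x) ->
  exists k, valid_index X P n k /\ exists x, sm_interior X d (cell X phi phiinv P n k) x.
Proof.
  intros Hinf Hpr Hcov.
  destruct (classic (exists x0 : X, True)) as [[x0 _]|Hn].
  2:{ exfalso. apply Hinf. exists nil. intros x. apply Hn. eauto. }
  set (U := fun x => exists A, In A P /\ sm_interior X d A x).
  assert (Uo : sm_open X d U).
  { intros x (A & HA & r & Hr & H). exists r. split; auto. intros y Hy.
    exists A. split; auto. exists (r - d x y). split; [lra|].
    intros z Hz. apply H. pose proof (d_tri X d Hm x y z). lra. }
  assert (Ud : dense U).
  { intros x r Hr. destruct (Hcov x) as [A [HA Ax]].
    destruct (Hpr A HA) as [_ Hp]. apply Hp in Ax. destruct (Ax r Hr) as [y [Hy1 Hy2]].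
    exists y. split; auto. exists A. auto. }
  set (ij := fun j : nat => (Z.of_nat j + 1 - Z.of_nat n)%Z).
  destruct (inter_od (fun j y => U (zp (ij j) y)) (2 * n)) as [_ Wd].
  { intros j. apply preim_od; auto. }
  { intros j. apply preim_od; auto. }
  destruct (Wd x0 1 ltac:(lra)) as [x [_ Hx]].
  set (k := fun i => ClassicalEpsilon.epsilon (inhabits 0%nat)
      (fun j => (j < length P)%nat /\ sm_interior X d (nth j P Fl) (zp i x))).
  assert (Hk : forall i, (1 - Z.of_nat n <= i <= Z.of_nat n - 1)%Z ->
     (k i < length P)%nat /\ sm_interior X d (nth (k i) P Fl) (zp i x)).
  { intros i Hi. unfold k. apply ClassicalEpsilon.epsilon_spec.
    assert (Hj : (Z.to_nat (i + Z.of_nat n - 1) < 2 * n)%nat) by lia.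
    specialize (Hx _ Hj). unfold ij in Hx.
    replace (Z.of_nat (Z.to_nat (i + Z.of_nat n - 1)) + 1 - Z.of_nat n)%Z with i in Hx by lia.
    destruct Hx as (A & HA & Hint).
    destruct (In_nth P A Fl HA) as (j & Hj1 & Hj2). exists j. subst A. auto. }
  exists k. split.
  - intros i Hi. apply Hk; auto.
  - exists x.
    destruct (finite_inter (fun j y => nth (k (ij j)) P Fl (zp (ij j) y)) x (2 * n - 1)) as [s [Hs H]].
    { intros j Hj.
      destruct (Z_le_gt_dec (ij j) (Z.of_nat n - 1)) as [Hle|Hgt].
      - destruct (Hk (ij j)) as [_ [r [Hr Hr']]]. { unfold ij in *; lia. }
        destruct (zpow_cont X d phi phiinv Hpi Hip (ij j) Hc1 Hc2 x r Hr) as [del [Hdel H']].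
        exists del. split; auto.
      - exists 1. split; [lra|]. intros. exfalso. unfold ij in Hgt. lia. }
    exists s. split; auto. intros y Hy i Hi.
    assert (Hj : (Z.to_nat (i + Z.of_nat n - 1) < 2 * n - 1)%nat) by lia.
    specialize (H y Hy _ Hj). unfold ij in H.
    replace (Z.of_nat (Z.to_nat (i + Z.of_nat n - 1)) + 1 - Z.of_nat n)%Z with i in H by lia.
    exact H.
Qed.

End T.
Section U.
Variable X : Type.
Variable d : X -> X -> R.
Variables phi phiinv : X -> X.
Variable br : X -> X -> X.
Variable eps1 : R.
Variable P : list (X -> Prop).
Hypothesis Hm : is_metric X d.
Hypothesis Hpi : forall x, phi (phiinv x) = x.
Hypothesis Hip : forall x, phiinv (phi x) = x.
Hypothesis Hc1 : sm_continuous X d phi.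
Hypothesis Hc2 : sm_continuous X d phiinv.
Hypothesis HMP : markov_partition X d phi phiinv br eps1 P.

Notation zp := (zpow X phi phiinv).
Notation Fl := (Fl X).

Lemma stable_prop n k x y : valid_index X P n k ->
  sm_interior X d (cell X phi phiinv P n k) x ->
  XsR X d br eps1 (zp (1 - Z.of_nat n) x) (nth (k (1 - Z.of_nat n)%Z) P Fl) y ->
  forall j, (j <= 2 * n - 2)%nat ->
  XsR X d br eps1 (zp (1 - Z.of_nat n + Z.of_nat j) x)
      (nth (k (1 - Z.of_nat n + Z.of_nat j)%Z) P Fl) (zp (Z.of_nat j) y).
Proof.
  intros Hv Hx Hy j. induction j as [|j IH]; intros Hj.
  - simpl. rewrite Z.add_0_r. exact Hy.
  - destruct HMP as (_ & _ & _ & HM4).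
    set (a := (1 - Z.of_nat n + Z.of_nat j)%Z) in *.
    replace (1 - Z.of_nat n + Z.of_nat (S j))%Z with (Z.succ a) by (unfold a; lia).
    replace (Z.of_nat (S j)) with (Z.succ (Z.of_nat j)) by lia.
    rewrite !zpow_succ by auto.
    pose proof (HM4 (k a) (k (Z.succ a)) (zp a x)) as HH.
    cbv zeta in HH.
    destruct HH as [_ H2].
    + apply Hv. unfold a; lia.
    + apply Hv. unfold a; lia.
    + apply (interior_iter X d phi phiinv Hpi Hip Hc1 Hc2 P n k x Hx). unfold a; lia.
    + rewrite <- zpow_succ by auto.
      apply (interior_iter X d phi phiinv Hpi Hip Hc1 Hc2 P n k x Hx). unfold a; lia.
    + apply H2. apply IH. lia.
Qed.

Lemma stable_cell n k x y : (1 <= n)%nat -> valid_index X P n k ->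
  sm_interior X d (cell X phi phiinv P n k) x ->
  XsR X d br eps1 (zp (1 - Z.of_nat n) x) (nth (k (1 - Z.of_nat n)%Z) P Fl) y ->
  cell X phi phiinv P n k (zp (Z.of_nat n - 1) y).
Proof.
  intros Hn Hv Hx Hy i Hi.
  assert (Hj : (Z.to_nat (i + Z.of_nat n - 1) <= 2 * n - 2)%nat) by lia.
  destruct (stable_prop n k x y Hv Hx Hy _ Hj) as [_ HA].
  replace (1 - Z.of_nat n + Z.of_nat (Z.to_nat (i + Z.of_nat n - 1)))%Z with i in HA by lia.
  rewrite zpow_add by auto.
  replace (i + (Z.of_nat n - 1))%Z with (Z.of_nat (Z.to_nat (i + Z.of_nat n - 1))) by lia.
  exact HA.
Qed.

Lemma unstable_prop n k x z : valid_index X P n k ->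
  sm_interior X d (cell X phi phiinv P n k) x ->
  XuR X d br eps1 (zp (Z.of_nat n - 1) x) (nth (k (Z.of_nat n - 1)%Z) P Fl) z ->
  forall j, (j <= 2 * n - 2)%nat ->
  XuR X d br eps1 (zp (Z.of_nat n - 1 - Z.of_nat j) x)
      (nth (k (Z.of_nat n - 1 - Z.of_nat j)%Z) P Fl) (zp (- Z.of_nat j) z).
Proof.
  intros Hv Hx Hz j. induction j as [|j IH]; intros Hj.
  - simpl. rewrite Z.sub_0_r. exact Hz.
  - destruct HMP as (_ & _ & _ & HM4).
    set (a := (Z.of_nat n - 1 - Z.of_nat j)%Z) in *.
    replace (Z.of_nat n - 1 - Z.of_nat (S j))%Z with (Z.pred a) by (unfold a; lia).
    replace (- Z.of_nat (S j))%Z with (Z.pred (- Z.of_nat j)) by lia.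
    rewrite (zpow_pred X phi phiinv Hpi Hip (- Z.of_nat j) z).
    pose proof (HM4 (k (Z.pred a)) (k a) (zp (Z.pred a) x)) as HH.
    cbv zeta in HH.
    assert (Hpa : phi (zp (Z.pred a) x) = zp a x).
    { rewrite <- zpow_succ by auto. rewrite Z.succ_pred. reflexivity. }
    rewrite Hpa in HH.
    destruct HH as [H1 _].
    + apply Hv. unfold a; lia.
    + apply Hv. unfold a; lia.
    + apply (interior_iter X d phi phiinv Hpi Hip Hc1 Hc2 P n k x Hx). unfold a; lia.
    + apply (interior_iter X d phi phiinv Hpi Hip Hc1 Hc2 P n k x Hx). unfold a; lia.
    + destruct (H1 _ (IH ltac:(lia))) as [y [Hy Hye]].
      rewrite <- Hye, Hip. exact Hy.
Qed.

Lemma unstable_cell n k x z : (1 <= n)%nat -> valid_index X P n k ->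
  sm_interior X d (cell X phi phiinv P n k) x ->
  XuR X d br eps1 (zp (Z.of_nat n - 1) x) (nth (k (Z.of_nat n - 1)%Z) P Fl) z ->
  cell X phi phiinv P n k (zp (1 - Z.of_nat n) z).
Proof.
  intros Hn Hv Hx Hz i Hi.
  assert (Hj : (Z.to_nat (Z.of_nat n - 1 - i) <= 2 * n - 2)%nat) by lia.
  destruct (unstable_prop n k x z Hv Hx Hz _ Hj) as [_ HA].
  replace (Z.of_nat n - 1 - Z.of_nat (Z.to_nat (Z.of_nat n - 1 - i)))%Z with i in HA by lia.
  rewrite zpow_add by auto.
  replace (i + (1 - Z.of_nat n))%Z with (- Z.of_nat (Z.to_nat (Z.of_nat n - 1 - i)))%Z by lia.
  exact HA.
Qed.

End U.

Lemma powerRZ_eq L n : (1 <= n)%nat -> powerRZ L (1 - Z.of_nat n) = / L ^ (n - 1).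
Proof.
  intros Hn. destruct n as [|m]; [lia|].
  replace (S m - 1)%nat with m by lia.
  replace (1 - Z.of_nat (S m))%Z with (- Z.of_nat m)%Z by lia.
  destruct m as [|m].
  - simpl. rewrite Rinv_1. reflexivity.
  - simpl. rewrite SuccNat2Pos.id_succ. reflexivity.
Qed.

Lemma final_ineq c low s D : 0 <= c -> low <= s -> s <= c * D -> 0 <= D -> / c * low <= D.
Proof.
  intros Hc H1 H2 HD. destruct (Req_dec c 0) as [->|Hne].
  - rewrite Rinv_0. lra.
  - assert (Hi : 0 < / c) by (apply Rinv_0_lt_compat; lra).
    apply Rle_trans with (/ c * s). apply Rmult_le_compat_l; lra.
    apply Rle_trans with (/ c * (c * D)). apply Rmult_le_compat_l; lra.
    right. field. auto.
Qed.

Theorem lemma6p15 (X : Type) (d : X -> X -> R) (phi phiinv : X -> X)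
  (br : X -> X -> X) (epsX lamX eps1 eps2 : R) (P : list (X -> Prop)) :
  is_smale_space X d phi phiinv br epsX lamX ->
  irreducible X d phi phiinv ->
  eps1_ok X d br epsX eps1 ->
  eps2_ok X d phi phiinv br eps1 eps2 ->
  markov_partition X d phi phiinv br eps1 P ->
  (forall A, In A P -> diam X d A <= eps2 / 2) ->
  (lipschitz X d phiinv ->
     forall n : nat, (1 <= n)%nat ->
       min_diam_Rn X d phi phiinv P n >=
       powerRZ (Lip X d phiinv) (1 - Z.of_nat n) * low_diam_s X d br eps1 P) /\
  (lipschitz X d phi ->
     forall n : nat, (1 <= n)%nat ->
       min_diam_Rn X d phi phiinv P n >=
       powerRZ (Lip X d phi) (1 - Z.of_nat n) * low_diam_u X d br eps1 P).
Proof.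
  intros HS _ _ _ HMP _.
  destruct HS as (Hm & Hcpt & Hinf & Hpi & Hip & Hc1 & Hc2 & _).
  destruct (bounded X d Hm Hcpt) as [M HM].
  pose proof HMP as (HP1 & Hcov & _ & _).
  assert (Hpr : forall A, In A P -> proper X d A) by (intros A HA; apply HP1; auto).
  assert (Hin : forall A x, sm_interior X d A x -> A x).
  { intros A x [r [Hr H]]. apply H. rewrite (d_refl X d Hm). auto. }
  split.
  - intros Hlip n Hn. apply Rle_ge.
    destruct (lip_att X d Hm phiinv Hlip) as [HL0 HL].
    set (L := Lip X d phiinv) in *.
    destruct (exists_cell X d phi phiinv Hm Hpi Hip Hc1 Hc2 P n Hinf Hpr Hcov) as [k0 [Hv0 [x0 Hx0]]].
    unfold min_diam_Rn.
    eapply real_glb_ge. { exists k0. split; [exact Hv0|]. split; [eauto|reflexivity]. }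
    intros r (k & Hv & [x Hx] & ->).
    rewrite powerRZ_eq by auto.
    set (i0 := (1 - Z.of_nat n)%Z).
    set (A0 := nth (k i0) P (Fl X)).
    set (w := zpow X phi phiinv i0 x).
    assert (HA0 : In A0 P) by (apply nth_In; apply Hv; unfold i0; lia).
    assert (Hw : A0 w) by (apply (Hin _ _ Hx); unfold i0; lia).
    apply final_ineq with (s := diam X d (XsR X d br eps1 w A0)).
    + apply pow_le; auto.
    + apply Rle_trans with (inf_diam_s X d br eps1 A0).
      * apply real_glb_le.
        -- intros r (A & _ & ->). apply real_glb_ge0. intros r (y & _ & ->). apply diam_ge0; auto.
        -- eauto.
      * apply real_glb_le.
        -- intros r (y & _ & ->). apply diam_ge0; auto.
        -- eauto.
    + apply diam_le; auto.
      { apply Rmult_le_pos. apply pow_le; auto. apply diam_ge0; auto. }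
      intros y1 y2 Hy1 Hy2.
      pose proof (stable_cell X d phi phiinv br eps1 P Hpi Hip Hc1 Hc2 HMP n k x y1 Hn Hv Hx Hy1) as C1.
      pose proof (stable_cell X d phi phiinv br eps1 P Hpi Hip Hc1 Hc2 HMP n k x y2 Hn Hv Hx Hy2) as C2.
      set (a1 := zpow X phi phiinv (Z.of_nat n - 1) y1) in *.
      set (a2 := zpow X phi phiinv (Z.of_nat n - 1) y2) in *.
      assert (E1 : y1 = Nat.iter (n - 1) phiinv a1).
      { rewrite <- (zpow_negnat X phi phiinv). unfold a1. rewrite (zpow_add X phi phiinv Hpi Hip).
        replace (- Z.of_nat (n - 1) + (Z.of_nat n - 1))%Z with 0%Z by lia. reflexivity. }
      assert (E2 : y2 = Nat.iter (n - 1) phiinv a2).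
      { rewrite <- (zpow_negnat X phi phiinv). unfold a2. rewrite (zpow_add X phi phiinv Hpi Hip).
        replace (- Z.of_nat (n - 1) + (Z.of_nat n - 1))%Z with 0%Z by lia. reflexivity. }
      rewrite E1, E2.
      eapply Rle_trans; [apply (iter_lip X d phiinv L); [exact HL0|exact HL]|].
      apply Rmult_le_compat_l. apply pow_le; auto.
      eapply diam_ge; eauto.
    + apply diam_ge0; auto.
  - intros Hlip n Hn. apply Rle_ge.
    destruct (lip_att X d Hm phi Hlip) as [HL0 HL].
    set (L := Lip X d phi) in *.
    destruct (exists_cell X d phi phiinv Hm Hpi Hip Hc1 Hc2 P n Hinf Hpr Hcov) as [k0 [Hv0 [x0 Hx0]]].
    unfold min_diam_Rn.
    eapply real_glb_ge. { exists k0. split; [exact Hv0|]. split; [eauto|reflexivity]. }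
    intros r (k & Hv & [x Hx] & ->).
    rewrite powerRZ_eq by auto.
    set (i0 := (Z.of_nat n - 1)%Z).
    set (A0 := nth (k i0) P (Fl X)).
    set (w := zpow X phi phiinv i0 x).
    assert (HA0 : In A0 P) by (apply nth_In; apply Hv; unfold i0; lia).
    assert (Hw : A0 w) by (apply (Hin _ _ Hx); unfold i0; lia).
    apply final_ineq with (s := diam X d (XuR X d br eps1 w A0)).
    + apply pow_le; auto.
    + apply Rle_trans with (inf_diam_u X d br eps1 A0).
      * apply real_glb_le.
        -- intros r (A & _ & ->). apply real_glb_ge0. intros r (y & _ & ->). apply diam_ge0; auto.
        -- eauto.
      * apply real_glb_le.
        -- intros r (y & _ & ->). apply diam_ge0; auto.
        -- eauto.
    + apply diam_le; auto.
      { apply Rmult_le_pos. apply pow_le; auto. apply diam_ge0; auto. }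
      intros y1 y2 Hy1 Hy2.
      pose proof (unstable_cell X d phi phiinv br eps1 P Hpi Hip Hc1 Hc2 HMP n k x y1 Hn Hv Hx Hy1) as C1.
      pose proof (unstable_cell X d phi phiinv br eps1 P Hpi Hip Hc1 Hc2 HMP n k x y2 Hn Hv Hx Hy2) as C2.
      set (a1 := zpow X phi phiinv (1 - Z.of_nat n) y1) in *.
      set (a2 := zpow X phi phiinv (1 - Z.of_nat n) y2) in *.
      assert (E1 : y1 = Nat.iter (n - 1) phi a1).
      { rewrite <- (zpow_nat X phi phiinv). unfold a1. rewrite (zpow_add X phi phiinv Hpi Hip).
        replace (Z.of_nat (n - 1) + (1 - Z.of_nat n))%Z with 0%Z by lia. reflexivity. }
      assert (E2 : y2 = Nat.iter (n - 1) phi a2).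
      { rewrite <- (zpow_nat X phi phiinv). unfold a2. rewrite (zpow_add X phi phiinv Hpi Hip).
        replace (Z.of_nat (n - 1) + (1 - Z.of_nat n))%Z with 0%Z by lia. reflexivity. }
      rewrite E1, E2.
      eapply Rle_trans; [apply (iter_lip X d phi L); [exact HL0|exact HL]|].
      apply Rmult_le_compat_l. apply pow_le; auto.
      eapply diam_ge; eauto.
    + apply diam_ge0; auto.
Qed.
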